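(* Let $G(\circ)$, $G(\ast)$ be groups on $G$ and $a\in G$ with $\mathrm{dist}_a>0$ and $|a|_\circ=|a|_\ast$. Then $\mathrm{dist}_a\ge 3$.
   Context: $|a|_\circ$, $|a|_\ast$ are the orders of $a$ in $G(\circ)$, $G(\ast)$. $\mathrm{dist}_a=|\{b\in G: a\circ b\ne a\ast b\}|$. *)

(* Defs.v *)
(* Two group structures on the same finite set G are encoded as
   two finGroupTypes gT1 (= G(o)) and gT2 (= G( * )) together with a bijection
   f : gT1 -> gT2 identifying their carriers. *)
From mathcomp Require Import all_boot all_fingroup.
Set Implicit Arguments. Unset Strict Implicit. Unset Printing Implicit Defensive.
Local Open Scope group_scope.

Definition dist (gT1 gT2 : finGroupType) (f : gT1 -> gT2) (a : gT1) : nat :=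
  #|[set b : gT1 | f (a * b) != f a * f b]|.

(* Main.v *)
Require Import Defs.
From mathcomp Require Import all_boot all_fingroup.
From mathcomp Require Import all_solvable.
From mathcomp Require Import zify.
Local Open Scope group_scope.

Lemma exp_ne1 (gT : finGroupType) (x : gT) n :
  (0 < n)%N -> (n < #[x])%N -> x ^+ n != 1.
Proof.
move=> n0 nk; rewrite -order_dvdn; apply/negP => /dvdn_leq => H.
by have := H n0; rewrite leqNgt nk.
Qed.

Lemma iter_lemma (gT1 gT2 : finGroupType) (f : gT1 -> gT2) (a b : gT1) m :
  (forall i, (i < m)%N -> f (a * (a ^+ i * b)) = f a * f (a ^+ i * b)) ->
  f (a ^+ m * b) = f a ^+ m * f b.
Proof.
elim: m => [|m IH] H; first by rewrite !expg0 !mul1g.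
rewrite expgS -mulgA H // IH; last by move=> i Hi; apply: H; lia.
by rewrite expgS mulgA.
Qed.

Theorem lemma4p13 (gT1 gT2 : finGroupType) (f : gT1 -> gT2)
  (f_bij : bijective f) (a : gT1) :
  (0 < dist f a)%N -> #[a] = #[f a] -> (3 <= dist f a)%N.
Proof.
case: f_bij => g fK gK.
have finj : injective f := can_inj fK.
rewrite /dist; set D := [set b | _] => Dpos ord.
have [x xD] : exists x, x \in D.
  by move: Dpos; rewrite card_gt0 => /set0Pn [x Hx]; exists x.
pose z := a^-1 * g (f a * f x).
have Ez : f (a * z) = f a * f x by rewrite /z mulKVg gK.
have zx : z != x.
  apply/eqP => E; move: xD; rewrite inE -E Ez E eqxx //.
have zD : z \in D.
  rewrite inE; apply/negP => /eqP E.
  by move: zx; rewrite E in Ez; move: Ez => /mulgI/finj ->; rewrite eqxx.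
rewrite leqNgt; apply/negP => lt3.
have D2 : D = [set x; z].
  apply/eqP; rewrite eq_sym eqEcard; apply/andP; split.
    by rewrite subUset !sub1set xD zD.
  by rewrite cards2 eq_sym zx; lia.
have notD : forall b, b != x -> b != z -> f (a * b) = f a * f b.
  move=> b bx bz; apply/eqP; apply: contraNT (bx) => H.
  have : b \in D by rewrite inE.
  by rewrite D2 !inE (negPf bz) orbF.
have k0 := order_gt0 a.
set k := #[a] in ord k0.
have powx : forall n, (0 < n)%N -> (n < k)%N -> forall b, a ^+ n * b != b.
  move=> n n0 nk b; apply/negP => /eqP E; move/negP: (@exp_ne1 _ a n n0 nk); apply.
  by rewrite -(mulg1 (a ^+ n)) -(mulgV b) mulgA E.
have [inC|notC] := boolP (z * x^-1 \in <[a]>).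
- case/cycleP: inC => j0 Ej0.
  have Ej : z = a ^+ (j0 %% k) * x by rewrite expg_mod_order -Ej0 mulgKV.
  set j := (j0 %% k)%N in Ej.
  have jk : (j < k)%N by rewrite ltn_mod.
  have j0' : (0 < j)%N.
    rewrite lt0n; apply: contra zx => /eqP j0e; by rewrite Ej j0e mul1g.
  have := @iter_lemma _ _ f a (a * z) (k - j).-1.
  have -> : a ^+ (k - j).-1 * (a * z) = x.
    rewrite Ej mulgA mulgA -expgSr -expgD.
    have -> : ((k - j).-1.+1 + j)%N = k by lia.
    by rewrite expg_order mul1g.
  move=> H.
  have Hx : f x = f a ^+ (k - j) * f x.
    rewrite {1}H; first by rewrite Ez mulgA -expgSr (_ : (k - j).-1.+1 = k - j)%N //; lia.
    move=> i Hi; apply: notD; rewrite mulgA -expgSr.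
      rewrite Ej mulgA -expgD; apply: powx; lia.
    apply: powx; lia.
  have : f a ^+ (k - j) == 1.
    by apply/eqP; apply: (mulIg (f x)); rewrite mul1g -Hx.
  by rewrite (negPf (@exp_ne1 _ _ _ _ _)) //; rewrite -?ord; lia.
- have := @iter_lemma _ _ f a (a * z) k.-1.
  have -> : a ^+ k.-1 * (a * z) = z.
    by rewrite mulgA -expgSr (_ : k.-1.+1 = k)%N ?expg_order ?mul1g //; lia.
  move=> H.
  have : f z = f x.
    rewrite H; first by rewrite Ez mulgA -expgSr (_ : k.-1.+1 = k)%N ?ord ?expg_order ?mul1g //; lia.
    move=> i Hi; apply: notD; rewrite mulgA -expgSr.
      apply: contra notC => /eqP E.
      by rewrite -E invMg mulgA mulgV mul1g groupV mem_cycle.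
    apply: powx; lia.
  by move/finj/eqP; rewrite (negPf zx).
Qed.
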